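(* Let $E$ be a regular biordered set satisfying (E1), (E2), (E3) below. Then for all $e,f\in E$ with $f\,\omega\,e'$, in the lattice $L(E)=E/\mathcal L$ we have $\mathcal L(e)\vee\mathcal L(f)=\mathcal L(e\oplus f)$ and $\mathcal L(e)\wedge\mathcal L(f)=\mathcal L(0)=\{0\}$. Conditions: (E1) there exists $0\in E$ with $0\,\omega\,x$ for every $x\in E$; (E2) there is a map $x\mapsto x'$ on $E$ such that for all $x,y\in E$: $(x')'=x$; $y\,\omega^l\,x$ iff $x'\,\omega^r\,y'$; $y\,\omega^l\,x'$ iff $M(y,x)=\{0\}$; (E3) for all $x,y\in E$, if $y\,\omega\,x'$ then $S(x',y')\cap S(y',x')\ne\emptyset$.
   Context: A regular biordered set is a partial algebra isomorphic to the set of idempotents $E(S)$ of a regular semigroup $S$ (regular: every $x$ has $y$ with $xyx=x$), where $ef$ (computed in $S$) is defined when $\{ef,fe\}\cap\{e,f\}\ne\emptyset$. In $E$: $\omega^l=\{(e,f): ef=e\}$, $\omega^r=\{(e,f): fe=e\}$, $\omega=\omega^l\cap\omega^r$; $M(e,f)=\{g\in E: g\,\omega^l\,e,\ g\,\omega^r\,f\}$; for $g,h\in M(e,f)$, $g\preceq h$ iff $eg\,\omega^r\,eh$ and $gf\,\omega^l\,hf$; $S(e,f)=\{h\in M(e,f): g\preceq h\text{ for all }g\in M(e,f)\}$. Under (E1)–(E3), for $f\,\omega\,e'$ the set $S(e',f')\cap S(f',e')$ has exactly one element $k$, and $e\oplus f:=k'$. $\mathcal L=\omega^l\cap(\omega^l)^{-1}$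 with classes $\mathcal L(e)$; $E/\mathcal L$ is ordered by $\mathcal L(e)\le\mathcal L(f)$ iff $e\,\omega^l\,f$ (a lattice under (E1),(E2)). *)

(* Defs.v *)
(* A regular biordered set is (up to isomorphism)
   the set E(S) of idempotents of a regular semigroup S, with all products
   computed in S.  We therefore work directly with E(S). *)

Set Implicit Arguments.
Section Biordered.
Variable S : Type.
Variable mul : S -> S -> S.
Local Infix "*" := mul.

Definition associative_op : Prop := forall x y z, x * (y * z) = (x * y) * z.
Definition regular_sg : Prop := forall x, exists y, x * y * x = x.

Definition idem (x : S) : Prop := x * x = x.

Definition omega_l (e f : S) : Prop := e * f = e.
Definition omega_r (e f : S) : Prop := f * e = e.
Definition omega (e f : S) : Prop := omega_l e f /\ omega_r e f.

Definition Lrel (e f : S) : Prop := omega_l e f /\ omega_l f e.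

Definition Mset (e f g : S) : Prop := idem g /\ omega_l g e /\ omega_r g f.

Definition sandwich_le (e f g h : S) : Prop :=
  omega_r (e * g) (e * h) /\ omega_l (g * f) (h * f).

Definition Sset (e f h : S) : Prop :=
  Mset e f h /\ forall g, Mset e f g -> sandwich_le e f g h.

(* In E/L ordered by L(a) <= L(b) iff a omega^l b:
   L(c) is the join of L(a) and L(b) *)
Definition L_is_join (a b c : S) : Prop :=
  omega_l a c /\ omega_l b c /\
  forall g, idem g -> omega_l a g -> omega_l b g -> omega_l c g.

Definition L_is_meet (a b c : S) : Prop :=
  omega_l c a /\ omega_l c b /\
  forall g, idem g -> omega_l g a -> omega_l g b -> omega_l g c.

Definition E1 (z : S) : Prop := idem z /\ forall x, idem x -> omega z x.

Definition E2 (z : S) (pr : S -> S) : Prop :=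
  (forall x, idem x -> idem (pr x)) /\
  (forall x, idem x -> pr (pr x) = x) /\
  (forall x y, idem x -> idem y -> (omega_l y x <-> omega_r (pr x) (pr y))) /\
  (forall x y, idem x -> idem y ->
     (omega_l y (pr x) <-> (forall g, idem g -> (Mset y x g <-> g = z)))).

Definition E3 (pr : S -> S) : Prop :=
  forall x y, idem x -> idem y -> omega y (pr x) ->
    exists k, Sset (pr x) (pr y) k /\ Sset (pr y) (pr x) k.

End Biordered.

(* Main.v *)
Require Import Defs.

Theorem proposition5p4
  (S : Type) (mul : S -> S -> S)
  (Hassoc : associative_op mul) (Hreg : regular_sg mul)
  (z : S) (pr : S -> S)
  (HE1 : E1 mul z) (HE2 : E2 mul z pr) (HE3 : E3 mul pr) :
  forall e f : S, idem mul e -> idem mul f -> omega mul f (pr e) ->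
  forall k : S, Sset mul (pr e) (pr f) k -> Sset mul (pr f) (pr e) k ->
    (* k' = e (+) f *)
    L_is_join mul e f (pr k) /\
    L_is_meet mul e f z /\
    (forall g, idem mul g -> Lrel mul g z -> g = z).
Proof.
  intros e f He Hf Hfe k Sk1 Sk2.
  destruct HE1 as [Hz Hzx].
  destruct HE2 as [Hpi [Hpp [H3 H4]]].
  unfold associative_op in Hassoc.
  unfold idem in *.
  destruct Sk1 as [[Hk [Hk1 Hk2]] Hmax].
  destruct Sk2 as [[_ [Hk3 Hk4]] _].
  unfold omega_l, omega_r in Hk1, Hk2, Hk3, Hk4.
  assert (Hpk : mul (pr k) (pr k) = pr k) by (apply Hpi; exact Hk).
  assert (Hpe : mul (pr e) (pr e) = pr e) by (apply Hpi; exact He).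
  assert (Hpf : mul (pr f) (pr f) = pr f) by (apply Hpi; exact Hf).
  split; [|split].
  - unfold L_is_join. split; [|split].
    + apply (proj2 (H3 (pr k) e Hpk He)). rewrite Hpp by exact Hk.
      unfold omega_r. exact Hk4.
    + apply (proj2 (H3 (pr k) f Hpk Hf)). rewrite Hpp by exact Hk.
      unfold omega_r. exact Hk2.
    + intros g Hg Heg Hfg.
      assert (Hpg : mul (pr g) (pr g) = pr g) by (apply Hpi; exact Hg).
      pose proof (proj1 (H3 g e Hg He) Heg) as A. unfold omega_r in A.
      pose proof (proj1 (H3 g f Hg Hf) Hfg) as B. unfold omega_r in B.
      apply (proj2 (H3 g (pr k) Hg Hpk)). rewrite Hpp by exact Hk.
      unfold omega_r.
      set (x := pr g) in *. set (e' := pr e) in *. set (f' := pr f) in *.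
      assert (HM : Mset mul e' f' (mul x e')).
      { unfold Mset, idem, omega_l, omega_r. split; [|split].
        - rewrite <- Hassoc, (Hassoc e' x e'), A, Hassoc, Hpg. reflexivity.
        - rewrite <- Hassoc, Hpe. reflexivity.
        - rewrite Hassoc, B. reflexivity. }
      destruct (Hmax _ HM) as [C _]. unfold omega_r in C.
      rewrite Hk4 in C. rewrite (Hassoc e' x e'), A in C.
      transitivity (mul k (mul (mul x e') x)).
      { f_equal. rewrite <- Hassoc, A, Hpg. reflexivity. }
      rewrite Hassoc, C, <- Hassoc, A. exact Hpg.
  - unfold L_is_meet. split; [|split].
    + exact (proj1 (Hzx e He)).
    + exact (proj1 (Hzx f Hf)).
    + intros g Hg Hge Hgf. unfold omega_l in *.
      assert (Hgpe : omega_l mul g (pr e)).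
      { unfold omega_l. destruct Hfe as [Hfe1 _]. unfold omega_l in Hfe1.
        transitivity (mul (mul g f) (pr e)); [rewrite Hgf; reflexivity|].
        rewrite <- Hassoc, Hfe1. exact Hgf. }
      pose proof (proj1 (H4 e g He Hg) Hgpe (mul e g)) as D.
      assert (Heg : mul e g = z).
      { apply D.
        - rewrite <- Hassoc, (Hassoc g e g), Hge, Hg. reflexivity.
        - unfold Mset, idem, omega_l, omega_r. split; [|split].
          + rewrite <- Hassoc, (Hassoc g e g), Hge, Hg. reflexivity.
          + rewrite <- Hassoc, Hg. reflexivity.
          + rewrite Hassoc, He. reflexivity. }
      rewrite <- Heg, Hassoc, Hge. exact Hg.
  - intros g Hg [Hgz Hzg]. unfold omega_l in Hgz, Hzg.
    destruct (Hzx g Hg) as [_ Hr]. unfold omega_r in Hr.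
    rewrite <- Hgz. exact Hr.
Qed.
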